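(* Every $2$-regular bipartite graph is a mirror bipartite graph.
   Context: A bipartite graph $G=(V_1\cup V_2,E)$ with stable sets $V_1,V_2$ is mirror if there is a bijection $\varphi:V_1\to V_2$ such that for all $u,v\in V_1$, $u\varphi(v)\in E$ if and only if $\varphi(u)v\in E$. *)

(* Defs.v *)
From mathcomp Require Import all_boot.
Set Implicit Arguments. Unset Strict Implicit. Unset Printing Implicit Defensive.

(* A finite (simple) bipartite graph G = (V1 ∪ V2, E) with stable sets V1, V2
   is given by two finite vertex types V1, V2 and an edge relation
   E : V1 -> V2 -> bool  (E u w  <=>  uw is an edge, u in V1, w in V2). *)

Definition deg1 (V1 V2 : finType) (E : V1 -> V2 -> bool) (u : V1) : nat :=
  #|[set w : V2 | E u w]|.
Definition deg2 (V1 V2 : finType) (E : V1 -> V2 -> bool) (w : V2) : nat :=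
  #|[set u : V1 | E u w]|.

Definition regular_bip (k : nat) (V1 V2 : finType) (E : V1 -> V2 -> bool) : Prop :=
  (forall u : V1, deg1 E u = k) /\ (forall w : V2, deg2 E w = k).

Definition mirror_bip (V1 V2 : finType) (E : V1 -> V2 -> bool) : Prop :=
  exists phi : V1 -> V2, bijective phi /\
    forall u v : V1, E u (phi v) = E v (phi u).

(* Main.v *)
Require Import Defs.
From mathcomp Require Import all_boot.
From mathcomp Require Import fingroup perm.
Set Implicit Arguments. Unset Strict Implicit. Unset Printing Implicit Defensive.
Local Open Scope nat_scope.

Section Refl.
Variables (D : finType) (a b : D -> D).
Hypotheses (aK : involutive a) (bK : involutive b).
Hypotheses (afree : forall x, a x != x) (bfree : forall x, b x != x).

Let gam x := b (a x).
Let gam_inj : injective gam.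
Proof. by move=> x y; rewrite /gam => /(inv_inj bK) /(inv_inj aK). Qed.
Let c := perm gam_inj.
Let f : D -> D := c.
Let h x := a (b x).
Let fE x : f x = b (a x). Proof. by rewrite /f permE. Qed.
Let fh x : f (h x) = x. Proof. by rewrite fE /h aK bK. Qed.
Let hf x : h (f x) = x. Proof. by rewrite fE /h bK aK. Qed.
Let iterfh n x : iter n f (iter n h x) = x.
Proof. elim: n x => // n IH x. by rewrite iterSr iterS fh IH. Qed.
Let iterhf n x : iter n h (iter n f x) = x.
Proof. elim: n x => // n IH x. by rewrite iterSr iterS hf IH. Qed.
Let iterC (g : D -> D) n m x : iter n g (iter m g x) = iter m g (iter n g x).
Proof. by rewrite -!iterD addnC. Qed.
Let orbP x y : reflect (exists i, y = iter i f x) (y \in porbit c x).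
Proof.
apply: (iffP (porbitP _ _ _)) => -[i ->]; exists i; by rewrite permX.
Qed.
Let orb_f x : porbit c (f x) = porbit c x.
Proof. by rewrite /f -(expg1 c) porbit_perm. Qed.
Let orb_h x : porbit c (h x) = porbit c x.
Proof. by rewrite -(orb_f (h x)) fh. Qed.
Let orb_iterf n x : porbit c (iter n f x) = porbit c x.
Proof. by elim: n => //= n IH; rewrite orb_f. Qed.
Let orb_iterh n x : porbit c (iter n h x) = porbit c x.
Proof. by elim: n => //= n IH; rewrite orb_h. Qed.

Let r x := odflt x [pick y in porbit c x].
Let r_in x : r x \in porbit c x.
Proof. rewrite /r; case: pickP => //= _; exact: porbit_id. Qed.
Let r_eq x y : porbit c x = porbit c y -> r x = r y.
Proof.
move=> P; rewrite /r P; case: pickP => //= H.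
by have := H y; rewrite porbit_id.
Qed.
Let orb_r x : porbit c (r x) = porbit c x.
Proof. by apply/eqP; rewrite eq_porbit_mem r_in. Qed.
Let exk x : exists i, x == iter i f (r x).
Proof.
have : x \in porbit c (r x) by rewrite porbit_sym r_in.
by case/orbP=> i e; exists i; rewrite -e.
Qed.
Let k x := xchoose (exk x).
Let kP x : iter (k x) f (r x) = x.
Proof. by rewrite /k; move/eqP: (xchooseP (exk x)) => <-. Qed.
Let rho x := iter (k x) h (r x).
Let rhoW x j : iter j f (r x) = x -> rho x = iter j h (r x).
Proof.
move=> e; rewrite /rho.
have E1 : iter (k x) f (r x) = iter j f (r x) by rewrite kP e.
rewrite -{1}(iterhf j (r x)) -E1.
by rewrite (iterC h (k x) j) iterhf.
Qed.

Let r_r x : r (r x) = r x. Proof. by apply: r_eq; rewrite orb_r. Qed.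
Let r_f x : r (f x) = r x. Proof. by apply: r_eq; rewrite orb_f. Qed.
Let rho_r x : rho (r x) = r x.
Proof. by rewrite (@rhoW (r x) 0) //= r_r. Qed.
Let rho_f x : rho (f x) = h (rho x).
Proof. by rewrite (@rhoW (f x) (k x).+1) r_f // iterS kP. Qed.
Let rho_h x : rho (h x) = f (rho x).
Proof. by rewrite -{2}(fh x) rho_f fh. Qed.
Let rho_iterh n x : rho (iter n h x) = iter n f (rho x).
Proof. by elim: n => //= n IH; rewrite rho_h IH. Qed.
Let rhoK x : rho (rho x) = x.
Proof. by rewrite {2}/rho rho_iterh rho_r kP. Qed.
Let orb_rho x : porbit c (rho x) = porbit c x.
Proof. by rewrite /rho orb_iterh orb_r. Qed.

Let a_f y : a (f y) = h (a y). Proof. by rewrite fE. Qed.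
Let a_iterf n y : a (iter n f y) = iter n h (a y).
Proof. by elim: n => //= n IH; rewrite a_f IH. Qed.
Let orb_a x y : porbit c y = porbit c x -> porbit c (a y) = porbit c (a x).
Proof.
move=> P; have : y \in porbit c x by rewrite -P porbit_id.
by case/orbP=> i ->; rewrite a_iterf orb_iterh.
Qed.
Let parity x : porbit c (a x) != porbit c x.
Proof.
apply/negP; rewrite eq_porbit_mem => /orbP[i ei].
have := odd_double_half i; case: (odd i) => /=; move: (i./2) => j ei'; rewrite -ei' in ei.
- have E2 : a (iter j.+1 f x) = iter j f x.
    have e2 : iter (true + j.*2) f x = iter j.+1 f (iter j f x) by rewrite -iterD addSn addnn.
    by rewrite a_iterf ei e2 iterhf.
  move: E2; rewrite iterS fE => E2.
  have E3 : b (a (iter j f x)) = a (iter j f x) by rewrite -{2}E2 aK.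
  by have := bfree (a (iter j f x)); rewrite E3 eqxx.
- have E2 : a (iter j f x) = iter j f x.
    have e2 : iter (false + j.*2) f x = iter j f (iter j f x) by rewrite -iterD addnn.
    by rewrite a_iterf ei e2 iterhf.
  by have := afree (iter j f x); rewrite E2 eqxx.
Qed.

Let base x := enum_rank (r x) < enum_rank (r (a x)).
Let base_orb x y : porbit c y = porbit c x -> base y = base x.
Proof. by move=> P; rewrite /base (r_eq P) (r_eq (orb_a P)). Qed.
Let base_a x : base (a x) = ~~ base x.
Proof.
rewrite /base aK -leqNgt [in RHS]leq_eqVlt; case: eqP => //= E0; have E := enum_rank_inj (ord_inj E0).
have := parity x; rewrite -(orb_r x) -(orb_r (a x)) E eqxx //.
Qed.

Definition theta x := if base x then rho x else b (rho (a x)).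

Let b_fa z : b z = f (a z). Proof. by rewrite fE aK. Qed.

Lemma thetaK x : theta (theta x) = x.
Proof.
rewrite /theta; case Bx: (base x).
  by rewrite (base_orb (orb_rho x)) Bx rhoK.
have -> : base (b (rho (a x))) = false.
  by rewrite b_fa (base_orb (orb_f _)) base_a (base_orb (orb_rho _)) base_a Bx.
have -> : a (b (rho (a x))) = h (rho (a x)) by [].
by rewrite rho_h rhoK fE aK bK.
Qed.

Lemma theta_a x : theta (a x) = b (theta x).
Proof.
rewrite /theta base_a; case: (base x) => /=; by rewrite ?aK ?bK.
Qed.
End Refl.

Section Oth.
Variable T : finType.
Definition oth (A : {set T}) (x : T) := odflt x [pick y in A :\ x].
Variables (A : {set T}) (HA : #|A| = 2).
Lemma oth_spec x : x \in A -> oth A x \in A /\ oth A x != x.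
Proof.
move=> xA; have : #|A :\ x| = 1 by move: HA; rewrite (cardsD1 x) xA => -[].
move/eqP/cards1P=> [y Ey]; rewrite /oth Ey; case: pickP => [z|/(_ y)]; last by rewrite inE eqxx.
rewrite inE => /eqP ->; have : y \in A :\ x by rewrite Ey inE.
by rewrite !inE => /andP[-> ->].
Qed.
Lemma oth_uniq x y : x \in A -> y \in A -> y != x -> y = oth A x.
Proof.
move=> xA yA yx; have : #|A :\ x| = 1 by move: HA; rewrite (cardsD1 x) xA => -[].
move/eqP/cards1P=> [z Ez].
have [o1 o2] := oth_spec xA.
have : y \in A :\ x by rewrite !inE yx.
have : oth A x \in A :\ x by rewrite !inE o1 o2.
by rewrite Ez !inE => /eqP -> /eqP ->.
Qed.
Lemma othK x : x \in A -> oth A (oth A x) = x.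
Proof.
move=> xA; have [o1 o2] := oth_spec xA.
by apply/esym/oth_uniq => //; rewrite eq_sym.
Qed.
End Oth.

Section Graph.
Variables (V1 V2 : finType) (E : V1 -> V2 -> bool).
Hypotheses (H1 : forall u, #|[set w | E u w]| = 2) (H2 : forall w, #|[set u | E u w]| = 2).

Definition Dt := {p : V1 * V2 | E p.1 p.2}.
Let N1 u := [set w | E u w].
Let N2 w := [set u | E u w].

Let alpha_pf (d : Dt) : E (val d).1 (oth (N1 (val d).1) (val d).2).
Proof.
have dP : (val d).2 \in N1 (val d).1 by rewrite inE (valP d).
by have [o1 _] := oth_spec (H1 _) dP; rewrite inE in o1.
Qed.
Let beta_pf (d : Dt) : E (oth (N2 (val d).2) (val d).1) (val d).2.
Proof.
have dP : (val d).1 \in N2 (val d).2 by rewrite inE (valP d).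
by have [o1 _] := oth_spec (H2 _) dP; rewrite inE in o1.
Qed.
Definition alpha (d : Dt) : Dt := exist _ ((val d).1, oth (N1 (val d).1) (val d).2) (alpha_pf d).
Definition beta (d : Dt) : Dt := exist _ (oth (N2 (val d).2) (val d).1, (val d).2) (beta_pf d).

Lemma alphaK : involutive alpha.
Proof.
move=> d; apply: val_inj; case: d => [[u w] /= H] /=.
by rewrite (othK (H1 u)) // /N1 inE.
Qed.
Lemma betaK : involutive beta.
Proof.
move=> d; apply: val_inj; case: d => [[u w] /= H] /=.
by rewrite (othK (H2 w)) // /N2 inE.
Qed.
Lemma alpha_free d : alpha d != d.
Proof.
case: d => [[u w] /= H]; apply/negP => /eqP/(f_equal val)/(f_equal snd) /=.
have dP : w \in N1 u by rewrite inE.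
by have [_ /eqP o2] := oth_spec (H1 u) dP.
Qed.
Lemma beta_free d : beta d != d.
Proof.
case: d => [[u w] /= H]; apply/negP => /eqP/(f_equal val)/(f_equal fst) /=.
have dP : u \in N2 w by rewrite /N2 inE.
by have [_ /eqP o2] := oth_spec (H2 w) dP.
Qed.

Let th := theta alphaK betaK.
Let thK x : th (th x) = x. Proof. exact: (@thetaK _ _ _ alphaK betaK alpha_free beta_free x). Qed.
Let th_a x : th (alpha x) = beta (th x). Proof. exact: (@theta_a _ _ _ alphaK betaK alpha_free beta_free x). Qed.
Let th_b x : th (beta x) = alpha (th x).
Proof. by rewrite -{1}(thK x) -th_a thK. Qed.

Let at_u (d d' : Dt) : (val d').1 = (val d).1 -> d' = d \/ d' = alpha d.
Proof.
case: d => [[u w] H]; case: d' => [[u' w'] H'] /= Eu; subst u'.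
case: (w' =P w) => [Ew|ne]; [left|right]; apply: val_inj => /=; first by rewrite Ew.
by congr pair; apply: (oth_uniq (H1 u)); rewrite /N1 ?inE //; apply/eqP.
Qed.
Let at_w (d d' : Dt) : (val d').2 = (val d).2 -> d' = d \/ d' = beta d.
Proof.
case: d => [[u w] H]; case: d' => [[u' w'] H'] /= Eu; subst w'.
case: (u' =P u) => [Ew|ne]; [left|right]; apply: val_inj => /=; first by rewrite Ew.
by congr pair; apply: (oth_uniq (H2 w)); rewrite /N2 ?inE //; apply/eqP.
Qed.
Let th1 d d' : (val d').1 = (val d).1 -> (val (th d')).2 = (val (th d)).2.
Proof. by case/at_u => ->; rewrite ?th_a. Qed.
Let th2 d d' : (val d').2 = (val d).2 -> (val (th d')).1 = (val (th d)).1.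
Proof. by case/at_w => ->; rewrite ?th_b. Qed.

Let nb1 u : exists w, E u w.
Proof.
have : 0 < #|N1 u| by rewrite /N1 H1.
by rewrite card_gt0 => /set0Pn [w]; rewrite inE; exists w.
Qed.
Let nb2 w : exists u, E u w.
Proof.
have : 0 < #|N2 w| by rewrite /N2 H2.
by rewrite card_gt0 => /set0Pn [u]; rewrite inE; exists u.
Qed.
Let e1 u : Dt := exist (fun p : V1 * V2 => E p.1 p.2) (u, xchoose (nb1 u)) (xchooseP (nb1 u)).
Let e2 w : Dt := exist (fun p : V1 * V2 => E p.1 p.2) (xchoose (nb2 w), w) (xchooseP (nb2 w)).
Let phi u := (val (th (e1 u))).2.
Let psi w := (val (th (e2 w))).1.
Let phi_d d : phi (val d).1 = (val (th d)).2.
Proof. exact: th1. Qed.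
Let psi_d d : psi (val d).2 = (val (th d)).1.
Proof. exact: th2. Qed.

Let sym u v : E u (phi v) -> E v (phi u).
Proof.
move=> Euv; pose d : Dt := exist (fun p : V1 * V2 => E p.1 p.2) (u, phi v) Euv.
have pv : psi (phi v) = v by rewrite /phi psi_d thK.
have e : (val (th d)).1 = v by rewrite -psi_d /= pv.
have := valP (th d); rewrite e.
by have -> : phi u = (val (th d)).2 by apply: (phi_d d).
Qed.

Lemma mirror_main : mirror_bip E.
Proof.
exists phi; split.
  exists psi => x; first by rewrite /phi psi_d thK.
  by rewrite /psi phi_d thK.
by move=> u v; apply/idP/idP; apply: sym.
Qed.
End Graph.

Theorem lemma4 (V1 V2 : finType) (E : V1 -> V2 -> bool) :
  regular_bip 2 E -> mirror_bip E.
Proof. by case=> H1 H2; apply: mirror_main. Qed.
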